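(* Let $M$ be a monoid in $\mathcal{C}$ and let $V=\mathbb{R}\otimes_\mathbb{Z}\mathrm{gp}(M)$. If $\mathsf{cone}_V(M)$ is polyhedral, then $M$ is finitary.
   Context: Convention: all monoids are commutative, cancellative, and reduced, written additively; $M^\bullet=M\setminus\{0\}$. $\mathcal{C}$ is the class of monoids isomorphic to a submonoid of a free commutative monoid of finite rank (equivalently, of $(\mathbb{N}^d,+)$). $M$ is regarded as a submonoid of $V$ via $M\hookrightarrow\mathrm{gp}(M)\hookrightarrow V$; $\mathsf{cone}_V(M)$ is the set of finite nonnegative linear combinations of elements of $M$. A cone is polyhedral if it is an intersection of finitely many closed half-spaces (equivalently, the conic hull of a finite set). A monoid is a BFM if every element is a sum of atoms and each element has a finite set of factorization lengths. $M$ is finitary if it is a BFM and there exist a finite $S\subseteq M$ and a positive integer $n$ with $nM^\bullet\subseteq S+M$, where $nM^\bullet=\{x_1+\dots+x_n:x_i\in M^\bullet\}$. *)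

(* Defs.v *)
From Stdlib Require Import Reals List Arith.
Import ListNotations.
Open Scope R_scope.

Section MonoidDefs.
Variable T : Type.
Variable add : T -> T -> T.
Variable zero : T.

Definition msum (l : list T) : T := fold_right add zero l.

Definition is_atom (x : T) : Prop :=
  x <> zero /\ forall a b, x = add a b -> a = zero \/ b = zero.

Definition has_fact_length (x : T) (n : nat) : Prop :=
  exists l : list T, Forall is_atom l /\ length l = n /\ msum l = x.

Definition BFM : Prop :=
  (forall x : T, exists n, has_fact_length x n) /\
  (forall x : T, exists N : nat, forall n, has_fact_length x n -> (n <= N)%nat).

Definition in_nMbullet (n : nat) (x : T) : Prop :=
  exists l : list T, length l = n /\ Forall (fun y => y <> zero) l /\ msum l = x.

Definition finitary : Prop :=
  BFM /\
  exists (S : list T) (n : nat), (1 <= n)%nat /\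
    forall x, in_nMbullet n x -> exists s m, In s S /\ x = add s m.
End MonoidDefs.

Definition embeds_in_Nd (T : Type) (add : T -> T -> T) (zero : T)
    (d : nat) (phi : T -> nat -> nat) : Prop :=
  (forall i, (i < d)%nat -> phi zero i = 0%nat) /\
  (forall x y i, (i < d)%nat -> phi (add x y) i = (phi x i + phi y i)%nat) /\
  (forall x y, (forall i, (i < d)%nat -> phi x i = phi y i) -> x = y).

Fixpoint lincomb (cs : list R) (gs : list (nat -> R)) (i : nat) : R :=
  match cs, gs with
  | c :: cs', g :: gs' => c * g i + lincomb cs' gs' i
  | _, _ => 0
  end.

Definition in_conic_hull (d : nat) (gs : list (nat -> R)) (v : nat -> R) : Prop :=
  exists cs : list R, length cs = length gs /\ Forall (fun c => 0 <= c) cs /\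
    forall i, (i < d)%nat -> v i = lincomb cs gs i.

Definition realvec (T : Type) (phi : T -> nat -> nat) (m : T) : nat -> R :=
  fun j => INR (phi m j).

Definition in_cone (T : Type) (d : nat) (phi : T -> nat -> nat) (v : nat -> R) : Prop :=
  exists ms : list T, in_conic_hull d (map (@realvec T phi) ms) v.

Definition cone_polyhedral (T : Type) (d : nat) (phi : T -> nat -> nat) : Prop :=
  exists gs : list (nat -> R),
    forall v : nat -> R, @in_cone T d phi v <-> in_conic_hull d gs v.

(* Main.v *)
Require Import Defs.
From Stdlib Require Import Reals List Arith Lia Lra Psatz Classical ZArith.
Import ListNotations.
Local Open Scope nat_scope.

Lemma list_bound (X : Type) (Q : X -> nat -> Prop) :
  (forall x B B', B <= B' -> Q x B -> Q x B') ->
  forall L, (forall x, In x L -> exists B, Q x B) -> exists B, forall x, In x L -> Q x B.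
Proof.
  intros Hm L. induction L as [|a L IH]; intros H.
  - exists 0. intros x [].
  - destruct (H a (or_introl eq_refl)) as [Ba HBa].
    destruct IH as [BL HBL]. { intros x Hx. apply H. now right. }
    exists (Nat.max Ba BL). intros x [<-|Hx].
    + apply (Hm _ Ba); [lia|auto].
    + apply (Hm _ BL); [lia|auto].
Qed.

Lemma dickson (A : Type) : forall n (I : list (A -> nat)), length I <= n ->
  forall P : A -> Prop, exists B, forall u, P u -> exists v, P v /\
    (forall p, In p I -> p v <= p u) /\ (forall p, In p I -> p v <= B).
Proof.
  induction n as [|n IH]; intros I HI P.
  - destruct I; [|simpl in HI; lia].
    exists 0. intros u Hu. exists u. split; [exact Hu|]. split; intros p [].
  - destruct (classic (exists u0, P u0)) as [[u0 Hu0]|Hno].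
    2:{ exists 0. intros u Hu. exfalso. apply Hno. eauto. }
    set (cases := flat_map (fun p => map (fun c => (p, c)) (seq 0 (p u0))) I).
    destruct (list_bound _ (fun (pc : (A -> nat) * nat) (B : nat) => forall u, P u -> fst pc u = snd pc ->
        exists v, P v /\ (forall p, In p I -> p v <= p u) /\ (forall p, In p I -> p v <= B)))
      with (L := cases) as [B1 HB1].
    { intros x B B' HBB' HQ u Hu Hc. destruct (HQ u Hu Hc) as [v [Hv [H1 H2]]].
      exists v. split; [exact Hv|]. split; [exact H1|]. intros p Hp. specialize (H2 p Hp). lia. }
    { intros [p c] Hin. unfold cases in Hin. apply in_flat_map in Hin.
      destruct Hin as [p' [Hp' Hm]]. apply in_map_iff in Hm. destruct Hm as [c' [Heq _]].
      injection Heq as <- <-. simpl.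
      destruct (in_split _ _ Hp') as [I1 [I2 HI12]].
      assert (Hlen : length (I1 ++ I2) <= n).
      { rewrite HI12, !length_app in HI. simpl in HI. rewrite length_app. lia. }
      destruct (IH (I1 ++ I2) Hlen (fun a => P a /\ p' a = c')) as [B' HB'].
      exists (B' + c'). intros u Hu Hc.
      destruct (HB' u (conj Hu Hc)) as [v [[Hv Hvc] [H1 H2]]].
      exists v. split; [exact Hv|]. split; intros q Hq; rewrite HI12 in Hq;
        apply in_app_iff in Hq; destruct Hq as [Hq|[<-|Hq]].
      + apply H1. apply in_app_iff; auto.
      + lia.
      + apply H1. apply in_app_iff; auto.
      + specialize (H2 q (proj2 (in_app_iff _ _ _) (or_introl Hq))). lia.
      + lia.
      + specialize (H2 q (proj2 (in_app_iff _ _ _) (or_intror Hq))). lia. }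
    destruct (list_bound _ (fun (p : A -> nat) (B : nat) => p u0 <= B)) with (L := I) as [B2 HB2].
    { intros; lia. }
    { intros p _. exists (p u0). lia. }
    exists (Nat.max B1 B2). intros u Hu.
    destruct (classic (exists p, In p I /\ p u < p u0)) as [[p [Hp Hlt]]|Hn].
    + assert (Hin : In (p, p u) cases).
      { unfold cases. apply in_flat_map. exists p. split; [exact Hp|].
        apply in_map_iff. exists (p u). split; [reflexivity|]. apply in_seq. lia. }
      destruct (HB1 _ Hin u Hu eq_refl) as [v [Hv [H1 H2]]].
      exists v. split; [exact Hv|]. split; [exact H1|]. intros q Hq. specialize (H2 q Hq). lia.
    + exists u0. split; [exact Hu0|]. split.
      * intros p Hp. destruct (Nat.lt_ge_cases (p u) (p u0)) as [Hl|Hl]; [|exact Hl].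
        exfalso. apply Hn. eauto.
      * intros p Hp. specialize (HB2 p Hp). lia.
Qed.

Lemma fin_choose (A B : Type) (f : A -> B) (Q : A -> Prop) :
  (forall a b, Q a -> Q b -> f a = f b -> a = b) ->
  forall L, exists S, forall a, Q a -> In (f a) L -> In a S.
Proof.
  intros Hinj L. induction L as [|b L [S HS]].
  - exists []. intros a _ [].
  - destruct (classic (exists a, Q a /\ f a = b)) as [[a0 [Qa0 Ha0]]|Hn].
    + exists (a0 :: S). intros a Qa [Hb|Hb].
      * left. apply Hinj; auto. congruence.
      * right. auto.
    + exists S. intros a Qa [Hb|Hb].
      * exfalso. apply Hn. eauto.
      * auto.
Qed.
Local Open Scope nat_scope.

Lemma emb_ext T add zero d phi : @embeds_in_Nd T add zero d phi ->
  forall x y, (forall i, i < d -> phi x i = phi y i) -> x = y.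
Proof. intros [_ [_ H]]. exact H. Qed.
Lemma emb_zero T add zero d phi : @embeds_in_Nd T add zero d phi ->
  forall i, i < d -> phi zero i = 0.
Proof. intros [H _]. exact H. Qed.
Lemma emb_add T add zero d phi : @embeds_in_Nd T add zero d phi ->
  forall x y i, i < d -> phi (add x y) i = phi x i + phi y i.
Proof. intros [_ [H _]]. exact H. Qed.

Fixpoint sumd (f : nat -> nat) (n : nat) : nat :=
  match n with 0 => 0 | S n => f n + sumd f n end.

Lemma sumd_add f g h n : (forall i, i < n -> f i = g i + h i) -> sumd f n = sumd g n + sumd h n.
Proof. induction n; simpl; intros H; auto. rewrite H, IHn; auto; lia. Qed.
Lemma sumd_zero f n : (forall i, i < n -> f i = 0) -> sumd f n = 0.
Proof. induction n; simpl; intros H; auto. rewrite H, IHn; auto; lia. Qed.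
Lemma sumd_zero_inv f n : sumd f n = 0 -> forall i, i < n -> f i = 0.
Proof. induction n; simpl; intros H i Hi; [lia|].
  destruct (Nat.eq_dec i n); [subst; lia|]. apply IHn; lia. Qed.

Definition sz {T : Type} (phi : T -> nat -> nat) d x := sumd (phi x) d.

Lemma sz_add T add zero d phi (E : @embeds_in_Nd T add zero d phi) x y :
  sz phi d (add x y) = sz phi d x + sz phi d y.
Proof. unfold sz. apply sumd_add. intros. apply (emb_add _ _ _ _ _ E); auto. Qed.

Lemma sz_pos T add zero d phi (E : @embeds_in_Nd T add zero d phi) x :
  x <> zero -> 1 <= sz phi d x.
Proof. intros Hx. destruct (Nat.eq_dec (sz phi d x) 0) as [H|H]; [|lia].
  exfalso. apply Hx. apply (emb_ext _ _ _ _ _ E). intros i Hi.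
  rewrite (emb_zero _ _ _ _ _ E) by auto. apply (sumd_zero_inv _ _ H); auto. Qed.

Lemma add_zero_r T add zero d phi (E : @embeds_in_Nd T add zero d phi) x : add x zero = x.
Proof. apply (emb_ext _ _ _ _ _ E). intros i Hi.
  rewrite (emb_add _ _ _ _ _ E), (emb_zero _ _ _ _ _ E) by auto. lia. Qed.

Lemma msum_app T add zero d phi (E : @embeds_in_Nd T add zero d phi) l1 l2 :
  msum _ add zero (l1 ++ l2) = add (msum _ add zero l1) (msum _ add zero l2).
Proof. induction l1 as [|a l1 IH]; simpl.
  - apply (emb_ext _ _ _ _ _ E). intros i Hi.
    rewrite (emb_add _ _ _ _ _ E), (emb_zero _ _ _ _ _ E) by auto. lia.
  - rewrite IH. apply (emb_ext _ _ _ _ _ E). intros i Hi.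
    rewrite !(emb_add _ _ _ _ _ E) by auto. lia. Qed.

Lemma len_le_sz T add zero d phi (E : @embeds_in_Nd T add zero d phi) l :
  Forall (fun y => y <> zero) l -> length l <= sz phi d (msum _ add zero l).
Proof. induction 1; simpl.
  - lia.
  - rewrite (sz_add _ _ _ _ _ E). pose proof (sz_pos _ _ _ _ _ E _ H). lia. Qed.

Lemma BFM_of T add zero d phi (E : @embeds_in_Nd T add zero d phi) : BFM _ add zero.
Proof.
  split.
  - assert (H : forall n x, sz phi d x <= n -> exists l, Forall (is_atom _ add zero) l /\ msum _ add zero l = x).
    { induction n as [|n IH]; intros x Hx.
      - exists []. split; [constructor|]. simpl.
        destruct (classic (x = zero)) as [->|Hz]; auto.
        pose proof (sz_pos _ _ _ _ _ E _ Hz). lia.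
      - destruct (classic (x = zero)) as [->|Hz].
        { exists []. split; [constructor|reflexivity]. }
        destruct (classic (is_atom _ add zero x)) as [Ha|Ha].
        { exists [x]. split; [constructor; auto|]. simpl. apply (add_zero_r _ _ _ _ _ E). }
        assert (Hab : exists a b, x = add a b /\ a <> zero /\ b <> zero).
        { apply NNPP. intros Hn. apply Ha. split; [exact Hz|]. intros a b Hxab.
          destruct (classic (a = zero)); [left; auto|]. destruct (classic (b = zero)); [right; auto|].
          exfalso. apply Hn. eauto. }
        destruct Hab as [a [b [Hxab [Ha0 Hb0]]]].
        pose proof (sz_pos _ _ _ _ _ E _ Ha0). pose proof (sz_pos _ _ _ _ _ E _ Hb0).
        assert (Hs : sz phi d x = sz phi d a + sz phi d b) by (rewrite Hxab; apply (sz_add _ _ _ _ _ E)).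
        destruct (IH a ltac:(lia)) as [la [Hla Hsa]]. destruct (IH b ltac:(lia)) as [lb [Hlb Hsb]].
        exists (la ++ lb). split; [apply Forall_app; auto|].
        rewrite (msum_app _ _ _ _ _ E). congruence. }
    intros x. destruct (H _ x (le_n _)) as [l [Hl Hs]]. exists (length l). exists l. auto.
  - intros x. exists (sz phi d x). intros n [l [Hl [Hn Hs]]]. subst.
    apply (len_le_sz _ _ _ _ _ E). eapply Forall_impl; [|exact Hl]. intros a [Ha _]. exact Ha.
Qed.
Local Open Scope nat_scope.

Fixpoint Kf {T} (phi : T -> nat -> nat) (F : list T) (w : nat -> nat) (i : nat) : nat :=
  match F with [] => 0 | f :: F' => w 0 * phi f i + Kf phi F' (fun j => w (S j)) i end.
Fixpoint rep {T} (add : T -> T -> T) zero (n : nat) (f : T) : T :=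
  match n with 0 => zero | S n => add f (rep add zero n f) end.
Fixpoint elemF {T} (add : T -> T -> T) zero (F : list T) (w : nat -> nat) : T :=
  match F with [] => zero
  | f :: F' => add (rep add zero (w 0) f) (elemF add zero F' (fun j => w (S j))) end.

Lemma phi_rep T add zero d phi (E : @embeds_in_Nd T add zero d phi) n f i :
  i < d -> phi (rep add zero n f) i = n * phi f i.
Proof. intros Hi. induction n; simpl.
  - apply (emb_zero _ _ _ _ _ E); auto.
  - rewrite (emb_add _ _ _ _ _ E), IHn by auto. lia. Qed.

Lemma phi_elemF T add zero d phi (E : @embeds_in_Nd T add zero d phi) F i :
  i < d -> forall w, phi (elemF add zero F w) i = Kf phi F w i.
Proof. intros Hi. induction F as [|f F IH]; intros w; simpl.
  - apply (emb_zero _ _ _ _ _ E); auto.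
  - rewrite (emb_add _ _ _ _ _ E), IH, (phi_rep _ _ _ _ _ E) by auto. lia. Qed.

Lemma Kf_mono {T} (phi : T -> nat -> nat) F i : forall w w',
  (forall j, j < length F -> w j <= w' j) -> Kf phi F w i <= Kf phi F w' i.
Proof. induction F as [|f F IH]; intros w w' H; simpl; [lia|].
  pose proof (H 0 ltac:(simpl; lia)).
  pose proof (IH (fun j => w (S j)) (fun j => w' (S j)) ltac:(intros j Hj; apply H; simpl; lia)).
  pose proof (Nat.mul_le_mono_r (w 0) (w' 0) (phi f i) H0). lia. Qed.

Lemma Kf_sub {T} (phi : T -> nat -> nat) F i : forall w w',
  (forall j, j < length F -> w' j <= w j) ->
  Kf phi F (fun j => w j - w' j) i + Kf phi F w' i = Kf phi F w i.
Proof. induction F as [|f F IH]; intros w w' H; simpl; [lia|].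
  pose proof (H 0 ltac:(simpl; lia)).
  pose proof (IH (fun j => w (S j)) (fun j => w' (S j)) ltac:(intros j Hj; apply H; simpl; lia)).
  rewrite Nat.mul_sub_distr_r.
  pose proof (Nat.mul_le_mono_r (w' 0) (w 0) (phi f i) H0). lia. Qed.

Local Open Scope R_scope.

Lemma lincomb_app cs1 cs2 gs1 gs2 i : length cs1 = length gs1 ->
  lincomb (cs1 ++ cs2) (gs1 ++ gs2) i = lincomb cs1 gs1 i + lincomb cs2 gs2 i.
Proof. revert gs1; induction cs1 as [|c cs1 IH]; intros [|g gs1] H; simpl in *; try lia.
  - lra.
  - rewrite IH by lia. lra. Qed.

Lemma lincomb_scale c a gs i : lincomb (map (Rmult c) a) gs i = c * lincomb a gs i.
Proof. revert gs; induction a as [|x a IH]; intros [|g gs]; simpl; try lra.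
  rewrite IH. lra. Qed.

Lemma lincomb_zeros n gs i : lincomb (repeat 0 n) gs i = 0.
Proof. revert gs; induction n as [|n IH]; intros [|g gs]; simpl; try lra.
  rewrite IH. lra. Qed.

Lemma unit_comb (gs : list (nat -> R)) g : In g gs -> exists cs, length cs = length gs /\
  Forall (fun c => 0 <= c) cs /\ forall i, g i = lincomb cs gs i.
Proof. induction gs as [|g0 gs IH]; intros Hin; [destruct Hin|].
  destruct Hin as [<-|Hin].
  - exists (1 :: repeat 0 (length gs)). split; [simpl; rewrite repeat_length; auto|].
    split. { constructor; [lra|]. apply Forall_forall. intros x Hx. apply repeat_spec in Hx. lra. }
    intros i. simpl. rewrite lincomb_zeros. lra.
  - destruct (IH Hin) as [cs [H1 [H2 H3]]]. exists (0 :: cs). split; [simpl; auto|].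
    split; [constructor; [lra|auto]|]. intros i. simpl. rewrite <- H3. lra. Qed.

Lemma compose T d (phi : T -> nat -> nat) gs :
  (forall g, In g gs -> exists ms, in_conic_hull d (map (realvec T phi) ms) g) ->
  exists F : list T, forall cs, length cs = length gs -> Forall (fun c => 0 <= c) cs ->
    exists cs', length cs' = length F /\ Forall (fun c => 0 <= c) cs' /\
      forall i, (i < d)%nat -> lincomb cs gs i = lincomb cs' (map (realvec T phi) F) i.
Proof.
  induction gs as [|g gs IH]; intros H.
  - exists []. intros cs Hl _. destruct cs; [|simpl in Hl; lia].
    exists []. split; [auto|]. split; [constructor|]. intros; simpl; lra.
  - destruct (H g (or_introl eq_refl)) as [ms [a [Ha1 [Ha2 Ha3]]]].
    destruct IH as [F' HF']. { intros g' Hg'. apply H. now right. }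
    exists (ms ++ F'). intros cs Hl Hnn. destruct cs as [|c cs]; [simpl in Hl; lia|].
    inversion Hnn; subst.
    destruct (HF' cs ltac:(simpl in Hl; lia) H3) as [cs' [Hc1 [Hc2 Hc3]]].
    exists (map (Rmult c) a ++ cs'). rewrite length_map in Ha1.
    split. { rewrite !length_app, length_map. lia. }
    split. { apply Forall_app. split; auto. apply Forall_forall. intros x Hx.
      apply in_map_iff in Hx. destruct Hx as [y [<- Hy]]. rewrite Forall_forall in Ha2.
      specialize (Ha2 y Hy). nra. }
    intros i Hi. simpl. rewrite map_app, lincomb_app by (rewrite !length_map; lia).
    rewrite lincomb_scale, <- Ha3, <- Hc3 by auto. lra.
Qed.

Lemma floor_nat c : 0 <= c -> exists n : nat, INR n <= c < INR n + 1.
Proof. intros Hc. destruct (archimed c) as [H1 H2].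
  assert (Hz : (0 <= up c - 1)%Z).
  { assert (0 < IZR (up c)) by lra. apply lt_IZR in H. lia. }
  exists (Z.to_nat (up c - 1)). rewrite INR_IZR_INZ, Z2Nat.id by auto.
  rewrite minus_IZR. simpl. lra. Qed.

Lemma floor_comb T (phi : T -> nat -> nat) F : forall cs, length cs = length F ->
  Forall (fun c => 0 <= c) cs -> exists w : nat -> nat, forall i,
    INR (Kf phi F w i) <= lincomb cs (map (realvec T phi) F) i <=
    INR (Kf phi F w i) + INR (Kf phi F (fun _ => 1%nat) i).
Proof.
  induction F as [|f F IH]; intros cs Hl Hnn.
  - exists (fun _ => 0%nat). intros i. destruct cs; simpl; lra.
  - destruct cs as [|c cs]; [simpl in Hl; lia|]. inversion Hnn; subst.
    destruct (IH cs ltac:(simpl in Hl; lia) H2) as [w' Hw'].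
    destruct (floor_nat c H1) as [n Hn].
    exists (fun j => match j with O => n | S j' => w' j' end). intros i.
    specialize (Hw' i). simpl. unfold realvec at 1.
    rewrite !plus_INR, !mult_INR. simpl INR at 2.
    change (realvec T phi f i) with (INR (phi f i)). change (fun j : nat => w' j) with w'.
    pose proof (pos_INR (phi f i)). replace (INR 0) with 0 by reflexivity.
    assert (INR n * INR (phi f i) <= c * INR (phi f i)) by (apply Rmult_le_compat_r; lra).
    assert (c * INR (phi f i) <= (INR n + 1) * INR (phi f i)) by (apply Rmult_le_compat_r; lra).
    lra.
Qed.
Local Open Scope nat_scope.

Fixpoint box (bnd : nat -> nat) (s : list nat) : list (list nat) :=
  match s with [] => [[]]
  | i :: s' => flat_map (fun l => map (fun c => c :: l) (seq 0 (S (bnd i)))) (box bnd s') end.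

Lemma in_box bnd (f : nat -> nat) s : (forall i, In i s -> f i <= bnd i) -> In (map f s) (box bnd s).
Proof. induction s as [|i s IH]; intros H; cbn [box map]; [left; reflexivity|].
  apply in_flat_map. exists (map f s). split; [apply IH; intros; apply H; now right|].
  apply in_map_iff. exists (f i). split; [auto|]. apply in_seq.
  specialize (H i (or_introl eq_refl)). lia. Qed.

Lemma map_eq_in (f g : nat -> nat) s : map f s = map g s -> forall i, In i s -> f i = g i.
Proof. induction s as [|a s IH]; simpl; intros H i Hi; [destruct Hi|].
  injection H as H1 H2. destruct Hi as [<-|Hi]; auto. Qed.

Theorem mainTheorem17 (T : Type) (add : T -> T -> T) (zero : T)
    (d : nat) (phi : T -> nat -> nat) :
  @embeds_in_Nd T add zero d phi ->
  @cone_polyhedral T d phi ->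
  @finitary T add zero.
Proof.
  intros E [gs Hgs].
  assert (Hg : forall g, In g gs -> exists ms, in_conic_hull d (map (realvec T phi) ms) g).
  { intros g Hin. destruct (unit_comb gs g Hin) as [cs [H1 [H2 H3]]].
    apply (proj2 (Hgs g)). exists cs. split; [auto|]. split; [auto|]. intros; apply H3. }
  destruct (compose T d phi gs Hg) as [F HF].
  set (Cf := fun i => Kf phi F (fun _ => 1) i).
  assert (Hdec : forall x, exists w, forall i, i < d ->
     Kf phi F w i <= phi x i <= Kf phi F w i + Cf i).
  { intros x.
    assert (Hc : in_cone T d phi (realvec T phi x)).
    { exists [x]. exists [1%R]. split; [auto|]. split; [constructor; [lra|constructor]|].
      intros i Hi. simpl. lra. }
    apply Hgs in Hc. destruct Hc as [cs [Hc1 [Hc2 Hc3]]].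
    destruct (HF cs Hc1 Hc2) as [cs' [Hd1 [Hd2 Hd3]]].
    destruct (floor_comb T phi F cs' Hd1 Hd2) as [w Hw].
    exists w. intros i Hi. specialize (Hw i). rewrite <- Hd3, <- Hc3 in Hw by auto.
    unfold realvec in Hw. rewrite <- plus_INR in Hw. destruct Hw as [Hw1 Hw2].
    apply INR_le in Hw1. apply INR_le in Hw2. unfold Cf. lia. }
  set (A := ((nat -> nat) * (nat -> nat))%type).
  set (I := map (fun j (a : A) => fst a j) (seq 0 (length F)) ++
            map (fun i (a : A) => snd a i) (seq 0 d) ++
            map (fun i (a : A) => Cf i - snd a i) (seq 0 d)).
  set (P := fun a : A => exists y, y <> zero /\ forall i, i < d ->
            phi y i = snd a i + Kf phi F (fst a) i /\ snd a i <= Cf i).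
  destruct (dickson A (length I) I (le_n _) P) as [B HB].
  set (bnd := fun i => B + Kf phi F (fun _ => B) i).
  set (Q := fun t => t <> zero /\ forall i, i < d -> phi t i <= bnd i).
  destruct (fin_choose T (list nat) (fun t => map (phi t) (seq 0 d)) Q) with
    (L := box bnd (seq 0 d)) as [S HS].
  { intros a b _ _ Hab. apply (emb_ext _ _ _ _ _ E). intros i Hi.
    apply (map_eq_in _ _ _ Hab). apply in_seq. lia. }
  assert (Key : forall x, x <> zero -> exists s m, In s S /\ x = add s m).
  { intros x Hx. destruct (Hdec x) as [w Hw].
    set (u := (w, fun i => phi x i - Kf phi F w i) : A).
    assert (Pu : P u).
    { exists x. split; [auto|]. intros i Hi. specialize (Hw i Hi). simpl. lia. }
    destruct (HB u Pu) as [v [[y [Hy0 Hy]] [H1 H2]]].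
    assert (Hf : forall j, j < length F -> fst v j <= fst u j /\ fst v j <= B).
    { intros j Hj. assert (Hin : In (fun a : A => fst a j) I).
      { unfold I. apply in_app_iff. left. apply in_map_iff. exists j. split; [auto|].
        apply in_seq. lia. }
      split; [apply (H1 _ Hin)|apply (H2 _ Hin)]. }
    assert (Hs : forall i, i < d -> snd v i = snd u i /\ snd v i <= B).
    { intros i Hi.
      assert (Hin1 : In (fun a : A => snd a i) I).
      { unfold I. apply in_app_iff. right. apply in_app_iff. left.
        apply in_map_iff. exists i. split; [auto|]. apply in_seq. lia. }
      assert (Hin2 : In (fun a : A => Cf i - snd a i) I).
      { unfold I. apply in_app_iff. right. apply in_app_iff. right.
        apply in_map_iff. exists i. split; [auto|]. apply in_seq. lia. }
      pose proof (H1 _ Hin1). pose proof (H1 _ Hin2). pose proof (H2 _ Hin1).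
      simpl in *. pose proof (Hw i Hi). pose proof (proj2 (Hy i Hi)). lia. }
    exists y, (elemF add zero F (fun j => fst u j - fst v j)). split.
    - apply HS.
      + split; [auto|]. intros i Hi. destruct (Hy i Hi) as [Hyi _]. rewrite Hyi.
        unfold bnd. pose proof (proj2 (Hs i Hi)).
        pose proof (Kf_mono phi F i (fst v) (fun _ => B) ltac:(intros j Hj; apply (Hf j Hj))).
        lia.
      + apply in_box. intros i Hi. apply in_seq in Hi. destruct (Hy i ltac:(lia)) as [Hyi _].
        rewrite Hyi. unfold bnd. pose proof (proj2 (Hs i ltac:(lia))).
        pose proof (Kf_mono phi F i (fst v) (fun _ => B) ltac:(intros j Hj; apply (Hf j Hj))).
        lia.
    - apply (emb_ext _ _ _ _ _ E). intros i Hi.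
      rewrite (emb_add _ _ _ _ _ E), (phi_elemF _ _ _ _ _ E) by auto.
      destruct (Hy i Hi) as [Hyi _]. rewrite Hyi.
      pose proof (Kf_sub phi F i (fst u) (fst v) ltac:(intros j Hj; apply (Hf j Hj))).
      pose proof (proj1 (Hs i Hi)). pose proof (Hw i Hi). simpl in *. lia. }
  split; [apply (BFM_of _ _ _ _ _ E)|].
  exists S, 1. split; [lia|].
  intros x [l [Hl [Hnz Hsum]]].
  destruct l as [|y [|y' l]]; simpl in Hl; try lia.
  inversion Hnz; subst. simpl. rewrite (add_zero_r _ _ _ _ _ E). apply Key. auto.
Qed.
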